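(* For every sequence $(\xi_i)_{i\in\mathbb N}$ of terms in $\Lambda$, there exists $\phi\in\Lambda$ such that: (1) $\phi\underline i\succ\xi_i$ for every $i\in\mathbb N$; (2) for every $U\in\Lambda$ such that $U\phi\Vdash\bot$, there exists $k\in\mathbb N$ such that $U\psi\Vdash\bot$ for every $\psi\in\Lambda$ satisfying $\psi\underline i\succ\xi_i$ for every $i<k$.
   Context: Fix an integer $N\ge 0$. The set $\Lambda$ of terms is the smallest set containing the constants $B,C,I,K,W,cc,A$ and $p,q_0,\dots,q_N$, closed under application $(\xi)\eta$ (written $\xi\eta$), and containing, for each sequence $(\xi_i)_{i\in\mathbb N}$ of closed terms (no occurrence of $p,q_0,\dots,q_N$), a constant $\bigwedge_i\xi_i$ (injectively, well-founded). Stacks: finite sequences $t_0\cdot\ldots\cdot t_{n-1}\cdot\pi_0$ of terms, $\pi_0$ the empty stack; $\Pi$ the set of stacks. $\ell_t=((C)(B)CB)t$, $k_{\pi_0}=A$, $k_{t\cdot\pi}=(\ell_t)k_\pi$; $\sigma=(BW)(C)(B)BB$, $\underline0=(K)I$, $\underline{n+1}=(\sigma)\underline n$. Execution $\succ$: least preorder on $\Lambda\times\Pi$ with $(\xi)\eta\star\pi\succ\xi\star\eta\cdot\pi$; $B\star\xi\cdot\eta\cdot\zeta\cdot\pi\succ\xi\star(\eta)\zeta\cdot\pi$; $C\star\xi\cdot\eta\cdot\zeta\cdot\pi\succ\xi\star\zeta\cdot\eta\cdot\pi$; $I\star\xi\cdot\pi\succ\xi\star\pi$; $K\star\xi\cdot\eta\cdot\pi\succ\xi\star\pi$;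 $W\star\xi\cdot\eta\cdot\pi\succ\xi\star\eta\cdot\eta\cdot\pi$; $cc\star\xi\cdot\pi\succ\xi\star k_\pi\cdot\pi$; $A\star\xi\cdot\pi\succ\xi\star\pi_0$; $\bigwedge_i\xi_i\star\underline n\cdot\pi\succ\xi_n\star\pi$. For terms, $\xi\succ\eta$ means $\xi\star\pi\succ\eta\star\pi$ for every $\pi\in\Pi$. Pole $\perp\!\!\!\perp=\{\xi\star\pi:\exists\varpi,\ \xi\star\pi\succ p\star\varpi\}$. $\xi\Vdash\bot$ means $\xi\star\pi\in\perp\!\!\!\perp$ for every $\pi\in\Pi$. *)

(* Defs.v *)
From Stdlib Require Import List.
Import ListNotations.

(* Raw terms.  [q j] is the constant q_j; membership j <= N is imposed by [inLambda N].
   [Inf f] is the constant /\_i f i (injective and well-founded by construction). *)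
Inductive term : Type :=
| cB | cC | cI | cK | cW | ccc | cA
| cp
| cq (j : nat)
| app (t u : term)
| Inf (f : nat -> term).

Inductive closed : term -> Prop :=
| cl_B : closed cB | cl_C : closed cC | cl_I : closed cI | cl_K : closed cK
| cl_W : closed cW | cl_cc : closed ccc | cl_A : closed cA
| cl_app t u : closed t -> closed u -> closed (app t u)
| cl_Inf f : (forall i, closed (f i)) -> closed (Inf f).

Inductive inLambda (N : nat) : term -> Prop :=
| L_B : inLambda N cB | L_C : inLambda N cC | L_I : inLambda N cI
| L_K : inLambda N cK | L_W : inLambda N cW | L_cc : inLambda N ccc
| L_A : inLambda N cA | L_p : inLambda N cp
| L_q j : j <= N -> inLambda N (cq j)
| L_app t u : inLambda N t -> inLambda N u -> inLambda N (app t u)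
| L_Inf f : (forall i, closed (f i) /\ inLambda N (f i)) -> inLambda N (Inf f).

(* stacks: finite sequences of terms, [] is pi_0 *)
Definition stack := list term.
Definition inPi (N : nat) (pi : stack) : Prop := Forall (inLambda N) pi.

Definition ell (t : term) : term := app (app cC (app (app cB cC) cB)) t.
Fixpoint kont (pi : stack) : term :=
  match pi with
  | [] => cA
  | t :: pi' => app (ell t) (kont pi')
  end.

Definition sigma : term := app (app cB cW) (app cC (app (app cB cB) cB)).
Fixpoint num (n : nat) : term :=
  match n with
  | 0 => app cK cI
  | S m => app sigma (num m)
  end.

Inductive step : term * stack -> term * stack -> Prop :=
| st_push t u pi : step (app t u, pi) (t, u :: pi)
| st_B x y z pi : step (cB, x :: y :: z :: pi) (x, app y z :: pi)
| st_C x y z pi : step (cC, x :: y :: z :: pi) (x, z :: y :: pi)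
| st_I x pi : step (cI, x :: pi) (x, pi)
| st_K x y pi : step (cK, x :: y :: pi) (x, pi)
| st_W x y pi : step (cW, x :: y :: pi) (x, y :: y :: pi)
| st_cc x pi : step (ccc, x :: pi) (x, kont pi :: pi)
| st_A x pi : step (cA, x :: pi) (x, [])
| st_Inf f n pi : step (Inf f, num n :: pi) (f n, pi).

Inductive exec : term * stack -> term * stack -> Prop :=
| ex_refl s : exec s s
| ex_step s1 s2 s3 : step s1 s2 -> exec s2 s3 -> exec s1 s3.

Definition texec (N : nat) (xi eta : term) : Prop :=
  forall pi, inPi N pi -> exec (xi, pi) (eta, pi).

Definition in_pole (N : nat) (xi : term) (pi : stack) : Prop :=
  exists varpi, inPi N varpi /\ exec (xi, pi) (cp, varpi).

Definition realizes_bot (N : nat) (xi : term) : Prop :=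
  forall pi, inPi N pi -> in_pole N xi pi.

(* Main.v *)
From Stdlib Require Import List Lia Arith Classical.
Import ListNotations.
Require Import Defs.

Lemma exec_trans a b c : exec a b -> exec b c -> exec a c.
Proof. induction 1; intros; auto. eapply ex_step; eauto. Qed.

Ltac go := repeat (eapply ex_step; [econstructor|]).

Definition is_atom (x t : term) : bool :=
  match x, t with cp, cp => true | cq i, cq j => Nat.eqb i j | _, _ => false end.
Lemma is_atom_eq x t : is_atom x t = true -> t = x.
Proof. destruct x, t; simpl; try discriminate; auto.
  intro H; apply Nat.eqb_eq in H; subst; auto. Qed.

Fixpoint Build (x t : term) : term :=
  match t with
  | app t1 t2 => app (app cB (Build x t1)) (app (app cB (app cB (Build x t2))) cB)
  | _ => if is_atom x t then cW else app (app cC cI) t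
  end.
Definition Abs x t := app (app cB ccc) (app cC (Build x t)).

Lemma Build_spec x t : forall k s, exec (Build x t, k :: x :: s) (k, t :: x :: s).
Proof.
  induction t; intros k s; simpl;
  try (destruct (is_atom x _) eqn:E; [apply is_atom_eq in E; subst; go; apply ex_refl | go; apply ex_refl]).
  go. eapply exec_trans. apply IHt1. go. eapply exec_trans. apply IHt2. go. apply ex_refl.
Qed.

Lemma fold_app_spec r : forall y s, exec (fold_left app r y, s) (y, r ++ s).
Proof. induction r; intros; simpl. apply ex_refl.
  eapply exec_trans. apply IHr. go. apply ex_refl. Qed.

Lemma kont_spec r : forall y s, exec (kont r, y :: s) (fold_left app r y, []).
Proof. induction r; intros; simpl. go. apply ex_refl.
  unfold ell. go. apply IHr. Qed.

Lemma kont_restore r y s : exec (kont r, y :: s) (y, r).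
Proof. eapply exec_trans. apply kont_spec. rewrite <- (app_nil_r r) at 2. apply fold_app_spec. Qed.

Lemma Abs_spec x t r : exec (Abs x t, x :: r) (t, r).
Proof. unfold Abs. go. eapply exec_trans. apply Build_spec. apply kont_restore. Qed.

Inductive wf (S : list term) : term -> Prop :=
| wf_B : wf S cB | wf_C : wf S cC | wf_I : wf S cI | wf_K : wf S cK
| wf_W : wf S cW | wf_cc : wf S ccc | wf_A : wf S cA
| wf_p : In cp S -> wf S cp
| wf_q j : In (cq j) S -> wf S (cq j)
| wf_app t u : wf S t -> wf S u -> wf S (app t u)
| wf_Inf f : (forall i, closed (f i)) -> wf S (Inf f).

Lemma wf_mono S S' t : incl S S' -> wf S t -> wf S' t.
Proof. intros Hi H; induction H; constructor; auto. Qed.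

Lemma wf_closed t : wf [] t -> closed t.
Proof. induction 1; try constructor; auto; simpl in *; tauto. Qed.

Lemma wf_Build x S t : wf (x :: S) t -> wf S (Build x t).
Proof.
  induction t; intro Hw; inversion Hw; subst; simpl;
  try (destruct (is_atom x _) eqn:E; repeat constructor; auto; fail).
  - destruct (is_atom x cp) eqn:E; repeat constructor.
    match goal with h: In _ (_ :: _) |- _ => destruct h end; auto. subst; simpl in E; congruence.
  - destruct (is_atom x (cq j)) eqn:E; repeat constructor.
    match goal with h: In _ (_ :: _) |- _ => destruct h end; auto. subst; simpl in E; rewrite Nat.eqb_refl in E; congruence.
  - repeat constructor; auto.
Qed.

Lemma wf_Abs x S t : wf (x :: S) t -> wf S (Abs x t).
Proof. intros; unfold Abs; repeat constructor; apply wf_Build; auto. Qed.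

Lemma wf_fr L : forall S T, wf (L ++ S) T -> wf S (fold_right Abs T L).
Proof. induction L; intros S T H; simpl in *; auto.
  apply wf_Abs. apply IHL. eapply wf_mono; [|exact H].
  intros z; simpl; rewrite !in_app_iff; simpl; tauto. Qed.

Lemma Lam_Build N x t : inLambda N t -> inLambda N (Build x t).
Proof. induction 1; simpl; try (destruct (is_atom x _); repeat constructor; auto; fail).
  repeat constructor; auto.
  destruct (is_atom x _); [constructor | apply L_app; [apply L_app; constructor | apply L_Inf; auto]]. Qed.

Lemma Lam_Abs N x t : inLambda N t -> inLambda N (Abs x t).
Proof. intros; unfold Abs; repeat constructor; apply Lam_Build; auto. Qed.

Lemma Lam_fr N L T : inLambda N T -> inLambda N (fold_right Abs T L).
Proof. induction L; simpl; auto using Lam_Abs. Qed.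

Definition Lat N := map cq (seq 0 (S N)) ++ [cp].

Lemma Lam_Lat N : Forall (inLambda N) (Lat N).
Proof. unfold Lat. apply Forall_app; split.
  apply Forall_forall; intros z Hz; apply in_map_iff in Hz; destruct Hz as [j [<- Hj]].
  apply in_seq in Hj; constructor; lia. repeat constructor. Qed.

Lemma inLambda_wf N t : inLambda N t -> wf (Lat N) t.
Proof. induction 1; try constructor; auto.
  - unfold Lat; rewrite in_app_iff; simpl; auto.
  - unfold Lat; rewrite in_app_iff; left; apply in_map; apply in_seq; lia.
  - intro i; apply H.
Qed.

Definition zeta N (xi : nat -> term) (i : nat) := fold_right Abs (xi i) (Lat N).
Definition f_C (X a : term) := app (app cC X) a.
Definition phiT N xi := fold_left f_C (Lat N) (Inf (zeta N xi)).

Lemma zeta_spec N xi i r : exec (zeta N xi i, Lat N ++ r) (xi i, r).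
Proof. unfold zeta. generalize (Lat N). induction l; simpl. apply ex_refl.
  eapply exec_trans. apply Abs_spec. auto. Qed.

Lemma fC_spec L : forall X y r, exec (fold_left f_C L X, y :: r) (X, y :: L ++ r).
Proof. induction L; intros; simpl. apply ex_refl.
  eapply exec_trans. apply IHL. unfold f_C. go. apply ex_refl. Qed.

Lemma Lam_phi N xi : (forall i, inLambda N (xi i)) -> inLambda N (phiT N xi).
Proof. intros Hx. unfold phiT.
  assert (inLambda N (Inf (zeta N xi))).
  { constructor. intro i; split.
    - apply wf_closed. apply wf_fr. rewrite app_nil_r. apply inLambda_wf; auto.
    - apply Lam_fr; auto. }
  revert H. generalize (Inf (zeta N xi)). pose proof (Lam_Lat N) as HL. induction HL; simpl; auto.
  intros; apply IHHL. unfold f_C; repeat constructor; auto.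
Qed.

Lemma phi_spec N xi i pi : exec (app (phiT N xi) (num i), pi) (xi i, pi).
Proof. eapply ex_step; [constructor|]. unfold phiT. eapply exec_trans. apply fC_spec.
  eapply ex_step; [constructor|]. apply zeta_spec. Qed.

Inductive execn : nat -> term * stack -> term * stack -> Prop :=
| en0 s : execn 0 s s
| enS n s1 s2 s3 : step s1 s2 -> execn n s2 s3 -> execn (S n) s1 s3.

Lemma exec_execn a b : exec a b -> exists j, execn j a b.
Proof. induction 1. exists 0; constructor. destruct IHexec as [j Hj]. exists (S j); econstructor; eauto. Qed.
Lemma execn_exec j a b : execn j a b -> exec a b.
Proof. induction 1; econstructor; eauto. Qed.

Lemma num_inj n : forall m, num n = num m -> n = m.
Proof. induction n; destruct m; simpl; intro H; inversion H; auto. Qed.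

Lemma step_det s a b : step s a -> step s b -> a = b.
Proof. intros H1 H2; inversion H1; subst; inversion H2; subst; auto.
  match goal with h: num _ = num _ |- _ => apply num_inj in h; subst; auto end. Qed.

Lemma det j c c' : execn j c c' -> forall m d, execn m c d -> (forall e, ~ step d e) ->
  j <= m /\ execn (m - j) c' d.
Proof. induction 1; intros m d Hm Ht.
  - rewrite Nat.sub_0_r; split; auto; lia.
  - inversion Hm; subst. exfalso; eapply Ht; eauto.
    assert (s2 = s4) by (eapply step_det; eauto). subst.
    destruct (IHexecn _ _ H2 Ht). split. lia. simpl. auto.
Qed.

Lemma det' c c' m d : exec c c' -> execn m c d -> (forall e, ~ step d e) ->
  exists m', m' <= m /\ execn m' c' d.
Proof. intros H1 H2 H3. destruct (exec_execn _ _ H1) as [j Hj].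
  destruct (det _ _ _ Hj _ _ H2 H3). exists (m - j); split; auto; lia. Qed.

Lemma term_p w : forall e, ~ step (cp, w) e.
Proof. intros e H; inversion H. Qed.

Lemma phi_anal N xi m s w : execn m (phiT N xi, s) (cp, w) ->
  exists n r m', s = num n :: r /\ execn m' (xi n, r) (cp, w) /\ m' < m.
Proof.
  intro H. destruct s as [|y s'].
  - exfalso. unfold phiT, Lat in H. rewrite fold_left_app in H. simpl in H.
    set (Y := fold_left _ _ _) in H.
    assert (exec (f_C Y cp, []) (cC, [Y; cp])) by (unfold f_C; go; apply ex_refl).
    destruct (det' _ _ _ _ H0 H (term_p w)) as [m' [_ Hm]].
    inversion Hm; subst; match goal with h : step _ _ |- _ => inversion h end.
  - destruct (det' _ _ _ _ (fC_spec (Lat N) (Inf (zeta N xi)) y s') H (term_p w)) as [m1 [Hm1 H1]].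
    inversion H1 as [|m2 s1 s2 s3 Hst Hrest]; subst. inversion Hst; subst.
    destruct (det' _ _ _ _ (zeta_spec N xi n s') Hrest (term_p w)) as [m3 [Hm3 H3']].
    exists n, s', m3. repeat split; auto. lia.
Qed.

Inductive noPA : term -> Prop :=
| nB : noPA cB | nC : noPA cC | nI : noPA cI | nK : noPA cK | nW : noPA cW
| ncc : noPA ccc | nq j : noPA (cq j) | napp t u : noPA t -> noPA u -> noPA (app t u)
| nInf f : noPA (Inf f).

Lemma noPA_num n : noPA (num n).
Proof. induction n; simpl; repeat constructor; auto. Qed.

Inductive R (N : nat) (phi psi : term) : term -> term -> Prop :=
| R_refl t : R N phi psi t t
| R_app t u t' u' : R N phi psi t t' -> R N phi psi u u' -> R N phi psi (app t u) (app t' u')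
| R_phi : R N phi psi phi psi
| R_A tau : inPi N tau -> R N phi psi cA (kont tau).

Lemma R_noPA N phi psi t y : R N phi psi t y -> noPA t -> ~ noPA phi -> y = t.
Proof. induction 1; intros H1 H2; auto.
  - inversion H1; subst. f_equal; auto.
  - contradiction.
  - inversion H1.
Qed.

Lemma R_kont N phi psi s s' tau : Forall2 (R N phi psi) s s' -> inPi N tau ->
  R N phi psi (kont s) (kont (s' ++ tau)).
Proof. induction 1; intros; simpl. constructor; auto.
  unfold ell. repeat apply R_app; auto; apply R_refl. Qed.

Lemma step_sim N phi psi t s t2 s2 s' tau :
  ~ noPA phi -> step (t, s) (t2, s2) -> Forall2 (R N phi psi) s s' -> inPi N tau ->
  exists t2' s2' tau2, exec (t, s' ++ tau) (t2', s2' ++ tau2) /\ inPi N tau2 /\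
    R N phi psi t2 t2' /\ Forall2 (R N phi psi) s2 s2'.
Proof.
  intros Hn Hs HF Ht. inversion Hs; subst; repeat match goal with
    h : Forall2 _ (_ :: _) _ |- _ => inversion h; subst; clear h end.
  - exists t2, (u :: s'), tau. split. go. apply ex_refl. repeat constructor; auto.
  - eexists _, (app _ _ :: _), tau. split. go. apply ex_refl. repeat constructor; auto.
  - eexists _, (_ :: _ :: _), tau. split. go. apply ex_refl. repeat constructor; auto.
  - eexists _, _, tau. split. go. apply ex_refl. repeat constructor; auto.
  - eexists _, _, tau. split. go. apply ex_refl. repeat constructor; auto.
  - eexists _, (_ :: _ :: _), tau. split. go. apply ex_refl. repeat constructor; auto.
  - eexists _, (kont (l' ++ tau) :: l'), tau. split. go. apply ex_refl.
    repeat constructor; auto. apply R_kont; auto.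
  - eexists _, [], []. split. go. apply ex_refl. repeat constructor; auto.
  - match goal with h : R _ _ _ (num _) _ |- _ => apply R_noPA in h; auto using noPA_num end. subst.
    eexists _, _, tau. split. eapply ex_step. constructor. apply ex_refl.
    split; auto. split; auto. apply R_refl.
Qed.

Definition Lc N (c : term * stack) := inLambda N (fst c) /\ inPi N (snd c).

Lemma Lam_kont N r : inPi N r -> inLambda N (kont r).
Proof. induction 1; simpl; repeat constructor; auto. Qed.

Lemma step_Lc N a b : step a b -> Lc N a -> Lc N b.
Proof. unfold Lc, inPi; intros Hs [H1 H2]; inversion Hs; subst; simpl in *;
  repeat match goal with h : Forall _ (_ :: _) |- _ => inversion h; subst; clear h end;
  try (inversion H1; subst); repeat constructor; auto.
  all: try (apply Lam_kont; auto).
  all: match goal with h : forall i, _ /\ _ |- _ => apply h end.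
Qed.

Lemma exec_Lc N a b : exec a b -> Lc N a -> Lc N b.
Proof. induction 1; eauto using step_Lc. Qed.

Definition reach N (c : term * stack) := exists w, inPi N w /\ exec c (cp, w).

Definition relc N phi psi (c c' : term * stack) :=
  exists s' tau, snd c' = s' ++ tau /\ inPi N tau /\ R N phi psi (fst c) (fst c') /\
    Forall2 (R N phi psi) (snd c) s'.

Definition agree N psi (xi : nat -> term) k :=
  forall i, i < k -> texec N (app psi (num i)) (xi i).

Lemma reach_back N a b : exec a b -> reach N b -> reach N a.
Proof. intros H [w [H1 H2]]. exists w; split; auto. eapply exec_trans; eauto. Qed.

Lemma reach_push N a b s : reach N (app a b, s) -> reach N (a, b :: s).
Proof. intros [w [H1 H2]]. exists w; split; auto. inversion H2; subst.
  inversion H; subst; auto. Qed.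

Lemma R_cp N phi psi y : R N phi psi cp y -> (exists a b, phi = app a b) -> y = cp.
Proof. intros H [a [b E]]. inversion H; subst; auto; discriminate. Qed.

Lemma sim N xi phi :
  (forall i, inLambda N (xi i)) -> ~ noPA phi -> (exists a b, phi = app a b) ->
  (forall m s w, execn m (phi, s) (cp, w) ->
     exists n r m', s = num n :: r /\ execn m' (xi n, r) (cp, w) /\ m' < m) ->
  forall m c w, execn m c (cp, w) -> exists k, forall psi, inLambda N psi -> agree N psi xi k ->
    forall c', relc N phi psi c c' -> Lc N c' -> reach N c'.
Proof.
  intros Hxi Hn Happ Hphi m. induction m as [m IH] using lt_wf_ind.
  intros [t s] w Hm. inversion Hm as [|m' s1 s2 s3 Hst Hrest]; subst.
  - exists 0. intros psi _ _ [t' s''] [s' [tau [E [Ht [HR HF]]]]] HL. simpl in *.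
    apply R_cp in HR; auto. subst. eexists. split. apply HL. apply ex_refl.
  - destruct (IH m' ltac:(lia) s2 w Hrest) as [k1 Hk1].
    assert (Hgen : forall psi, inLambda N psi -> agree N psi xi k1 -> forall t' s'',
      relc N phi psi (t, s) (t', s'') -> Lc N (t', s'') -> t <> phi \/ t' <> psi ->
      reach N (t', s'')).
    { intros psi Hpsi Hag t' s'' [s' [tau [E [Ht [HR HF]]]]] HL Hor. simpl in *. subst s''.
      assert (Hfin : forall t2' s2' tau2, exec (t', s' ++ tau) (t2', s2' ++ tau2) -> inPi N tau2 ->
         R N phi psi (fst s2) t2' -> Forall2 (R N phi psi) (snd s2) s2' -> reach N (t', s' ++ tau)).
      { intros t2' s2' tau2 He Ht2 HR2 HF2. eapply reach_back. exact He.
        apply (Hk1 psi Hpsi Hag). exists s2', tau2; simpl; auto.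
        eapply exec_Lc; eauto. }
      destruct s2 as [t2 s2]. inversion HR; subst.
      - destruct (step_sim N phi psi _ _ _ _ _ _ Hn Hst HF Ht) as [t2' [s2' [tau2 [A1 [A2 [A3 A4]]]]]].
        eapply Hfin; eauto.
      - inversion Hst; subst. apply (Hfin t'0 (u' :: s') tau). go. apply ex_refl. auto. auto.
        constructor; auto.
      - destruct Hor; contradiction.
      - inversion Hst; subst. inversion HF as [|y1 y2 l1 l2 Hy HF']; subst.
        apply (Hfin y2 [] tau0). simpl. eapply exec_trans. apply kont_restore. apply ex_refl.
        auto. auto. constructor. }
    destruct (classic (t = phi)) as [Ep | Ep].
    + subst t. destruct (Hphi _ _ _ Hm) as [n [r [m2 [Es [Hx Hlt]]]]].
      destruct (IH m2 ltac:(lia) _ _ Hx) as [k2 Hk2].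
      exists (max k1 (max k2 (S n))). intros psi Hpsi Hag [t' s''] Hrel HL.
      destruct (classic (t' = psi)) as [Eq | Eq].
      * subst t'. subst s. destruct Hrel as [s' [tau [E [Ht [HR HF]]]]]. simpl in *. subst s''.
        inversion HF as [|y1 y2 l1 l2 Hy HF']; subst.
        apply R_noPA in Hy; auto using noPA_num. subst.
        apply reach_push. eapply reach_back. apply (Hag n ltac:(lia)).
        destruct HL as [_ HL]; simpl in HL; inversion HL; auto.
        apply (Hk2 psi Hpsi). intros i Hi; apply Hag; lia.
        exists l2, tau; simpl; repeat split; auto. apply R_refl.
        split; simpl. auto. destruct HL as [_ HL]; simpl in HL; inversion HL; auto.
      * apply (Hgen psi Hpsi); auto. intros i Hi; apply Hag; lia.
    + exists k1. intros psi Hpsi Hag c' Hrel HL. destruct c' as [t' s''].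
      apply (Hgen psi Hpsi); auto.
Qed.

Lemma phi_shape N xi : exists Y, phiT N xi = app (app cC Y) cp.
Proof. unfold phiT, Lat. rewrite fold_left_app. simpl. eexists; reflexivity. Qed.

Theorem theorem2 (N : nat) (xi : nat -> term) :
  (forall i, inLambda N (xi i)) ->
  exists phi : term,
    inLambda N phi /\
    (forall i, texec N (app phi (num i)) (xi i)) /\
    (forall U : term, inLambda N U ->
       realizes_bot N (app U phi) ->
       exists k : nat,
         forall psi : term, inLambda N psi ->
           (forall i, i < k -> texec N (app psi (num i)) (xi i)) ->
           realizes_bot N (app U psi)).
Proof.
  intro Hxi. exists (phiT N xi). split; [apply Lam_phi; auto|]. split.
  { intros i pi _. apply phi_spec. }
  intros U HU Hb. destruct (phi_shape N xi) as [Y EY].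
  assert (Hn : ~ noPA (phiT N xi)).
  { rewrite EY; intro h; inversion h; subst. match goal with h : noPA cp |- _ => inversion h end. }
  destruct (Hb [] (Forall_nil _)) as [w [Hw He]].
  destruct (exec_execn _ _ He) as [m Hm].
  destruct (sim N xi (phiT N xi) Hxi Hn (ex_intro _ _ (ex_intro _ _ EY)) (phi_anal N xi) m _ w Hm)
    as [k Hk].
  exists k. intros psi Hpsi Hag pi Hpi.
  destruct (Hk psi Hpsi Hag (app U psi, pi)) as [w' [Hw' He']].
  - exists [], pi. simpl. repeat split; auto. apply R_app. apply R_refl. apply R_phi.
  - split; simpl; auto. constructor; auto.
  - exists w'; auto.
Qed.
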